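(* Let $L$ be a Lie algebra with $Z(L)=0$ and let $I$ be an ideal of $L$. Then $\mathrm{Ann}_L(I)=0$ if and only if $\mathrm{r.ann}_{A(L)}(A_L(I))=0$.
   Context: Lie algebras over a commutative unital ring $\Phi$. $\mathrm{ad}_x(y)=[x,y]$; $A(L)$ is the associative subalgebra of $\mathrm{End}_\Phi(L)$ generated by $\{\mathrm{ad}_x:x\in L\}$, and $A_L(I)$ is its subalgebra generated by $\{\mathrm{ad}_x:x\in I\}$. $\mathrm{Ann}_L(X)=\{a\in L:[a,x]=0\ \forall x\in X\}$, $Z(L)=\mathrm{Ann}_L(L)$. For an associative algebra $B$ and $X\subseteq B$, $\mathrm{r.ann}_B(X)=\{b\in B: Xb=0\}$. *)

(* Defs.v *)
From HB Require Import structures.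
From mathcomp Require Import all_boot all_order all_algebra.
Set Implicit Arguments. Unset Strict Implicit. Unset Printing Implicit Defensive.
Import GRing.Theory.
Local Open Scope ring_scope.

Definition is_lie_bracket (R : comPzRingType) (L : lmodType R)
  (br : L -> L -> L) : Prop :=
  [/\ (forall a x y z, br (a *: x + y) z = a *: br x z + br y z),
      (forall a x y z, br z (a *: x + y) = a *: br z x + br z y),
      (forall x, br x x = 0) &
      (forall x y z, br x (br y z) + br y (br z x) + br z (br x y) = 0)].

Definition is_lie_ideal (R : comPzRingType) (L : lmodType R)
  (br : L -> L -> L) (I : L -> Prop) : Prop :=
  [/\ I 0,
      (forall x y, I x -> I y -> I (x + y)),
      (forall (a : R) x, I x -> I (a *: x)) &
      (forall a x, I x -> I (br a x))].

Definition Ann (R : comPzRingType) (L : lmodType R)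
  (br : L -> L -> L) (X : L -> Prop) (a : L) : Prop :=
  forall x, X x -> br a x = 0.

(* Agen br S f : f belongs to the associative (non-unital) subalgebra of
   End_R(L) generated by { ad_x : x in S }, where ad_x = br x.
   Endomorphisms are represented as functions L -> L, identified
   extensionally; multiplication is composition. *)
Inductive Agen (R : comPzRingType) (L : lmodType R)
  (br : L -> L -> L) (S : L -> Prop) : (L -> L) -> Prop :=
| Agen_ad x : S x -> Agen br S (br x)
| Agen_zero : Agen br S (fun _ => 0)
| Agen_add f g : Agen br S f -> Agen br S g -> Agen br S (fun v => f v + g v)
| Agen_scale (c : R) f : Agen br S f -> Agen br S (fun v => c *: f v)
| Agen_comp f g : Agen br S f -> Agen br S g -> Agen br S (fun v => f (g v))
| Agen_ext f g : Agen br S f -> (forall v, f v = g v) -> Agen br S g.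

Definition AL (R : comPzRingType) (L : lmodType R) (br : L -> L -> L) :=
  Agen br (fun _ => True).
Definition ALI (R : comPzRingType) (L : lmodType R) (br : L -> L -> L)
  (I : L -> Prop) := Agen br I.

Definition rann (R : comPzRingType) (L : lmodType R)
  (B X : (L -> L) -> Prop) (b : L -> L) : Prop :=
  B b /\ forall c, X c -> forall v, c (b v) = 0.

(* Main.v *)
Require Import Defs.
From mathcomp Require Import all_boot all_order all_algebra.
Local Open Scope ring_scope.
Import GRing.Theory.

Section H.
Variables (R : comPzRingType) (L : lmodType R) (br : L -> L -> L).
Hypothesis Hb : is_lie_bracket br.

Lemma brDl x y z : br (x + y) z = br x z + br y z.
Proof. case: Hb => H1 _ _ _. by rewrite -{1}(scale1r x) H1 scale1r. Qed.
Lemma brDr x y z : br z (x + y) = br z x + br z y.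
Proof. case: Hb => _ H2 _ _. by rewrite -{1}(scale1r x) H2 scale1r. Qed.
Lemma br0r z : br z 0 = 0.
Proof.
have := brDr 0 0 z; rewrite addr0 => /eqP.
by rewrite -subr_eq0 opprD addrA subrr sub0r oppr_eq0 => /eqP.
Qed.
Lemma brN x y : br x y = - br y x.
Proof.
case: Hb => _ _ H3 _.
have := H3 (x + y); rewrite brDl !brDr !H3 add0r addr0 => /eqP.
by rewrite addr_eq0 => /eqP.
Qed.
End H.
Arguments brN {R L br}. Arguments br0r {R L br}.

Theorem mainTheorem9 (R : comPzRingType) (L : lmodType R)
  (br : L -> L -> L) (I : L -> Prop) :
  is_lie_bracket br ->
  (forall z, Ann br (fun _ => True) z -> z = 0) ->
  is_lie_ideal br I ->
  ((forall a, Ann br I a -> a = 0) <->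
   (forall b, rann (AL br) (ALI br I) b -> forall v, b v = 0)).
Proof.
move=> Hb HZ HI; split.
- move=> HA b [_ Hc] v; apply: HA => x Ix.
  have := Hc _ (Agen_ad br Ix) v.
  by rewrite (brN Hb) => /eqP; rewrite oppr_eq0 => /eqP.
- move=> Hr a Ha; apply: HZ => v _.
  have P : forall c, ALI br I c -> (forall v, c (br a v) = 0) /\ c 0 = 0.
    move=> c; elim=> {c}.
    + move=> x Ix; split; last by rewrite (br0r Hb).
      move=> w; have [_ _ _ J] := Hb.
      have := J x a w.
      have -> : br a (br w x) = 0.
        apply: Ha; case: HI => _ _ _ H4; exact: H4.
      have -> : br w (br x a) = 0.
        by rewrite (brN Hb x a) (Ha x Ix) oppr0 (br0r Hb).
      by rewrite !addr0.
    + by [].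
    + by move=> f g _ [H1 H2] _ [H3 H4]; split=> [w|]; rewrite ?H1 ?H3 ?H2 ?H4 addr0.
    + by move=> c f _ [H1 H2]; split=> [w|]; rewrite ?H1 ?H2 scaler0.
    + by move=> f g _ [H1 H2] _ [H3 H4]; split=> [w|]; rewrite ?H3 ?H4 H2.
    + by move=> f g _ [H1 H2] E; split=> [w|]; rewrite -E.
  apply: (Hr (br a)); split; first by apply: Agen_ad.
  by move=> c Hc w; case: (P c Hc).
Qed.
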